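(* Let $\phi\in\mathrm{Aut}_0(H)$. Then $\phi(H(m))\subseteq\sum_{i=0}^mH(i)$ for all $m\geq0$.
   Context: Let $k$ be a field and $0\neq q\in k$ not a root of unity. $H=k_q[x,x^{-1},y]$ is the $k$-algebra generated by $x,x^{-1},y$ with $xx^{-1}=x^{-1}x=1$, $yx=qxy$, a Hopf algebra with $\Delta(x)=x\otimes x$, $\Delta(x^{-1})=x^{-1}\otimes x^{-1}$, $\Delta(y)=y\otimes x+1\otimes y$, $\varepsilon(x)=1$, $\varepsilon(y)=0$; $\{x^ny^m:n\in\mathbb{Z},m\in\mathbb{N}\}$ is a $k$-basis. $H_0=\mathrm{span}\{x^n:n\in\mathbb{Z}\}$ and $H(m)=H_0y^m$. $\mathrm{Aut}_0(H)$ is the group of coalgebra automorphisms $\phi$ of $H$ with $\phi(1)=1$. *)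

(* Defs.v *)
(* H = k_q[x,x^-1,y] is modelled as the free k-module on the
   basis {x^n y^m : n : int, m : nat}, i.e. finitely supported functions
   (int * nat) -> k ({malg k[int * nat]} from multinomials' monalg);
   H (x) H is the free module on pairs of basis elements. *)
From HB Require Import structures.
From mathcomp Require Import all_boot all_algebra.
From mathcomp Require Import finmap.
From mathcomp.multinomials Require Import monalg.
Set Implicit Arguments. Unset Strict Implicit. Unset Printing Implicit Defensive.
Import GRing.Theory.
Local Open Scope ring_scope.

Section QPlane.
Variables (k : fieldType) (q : k).

(* basis index (n, m) stands for x^n y^m *)
Definition Kb := (int * nat)%type.
Definition HH := {malg k[Kb]}.
(* basis index (a, b) of H (x) H stands for (x^a.1 y^a.2) (x) (x^b.1 y^b.2) *)
Definition TT := {malg k[(Kb * Kb)%type]}.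

(* Multiplication on H (x) H (tensor product algebra), using
   y^b x^c = q^(b c) x^c y^b in each factor. *)
Definition twist (s t : Kb * Kb) : k :=
  q ^ ((s.1.2)%:Z * t.1.1 + (s.2.2)%:Z * t.2.1).
Definition kmul (s t : Kb * Kb) : Kb * Kb :=
  ((s.1.1 + t.1.1, (s.1.2 + t.1.2)%N), (s.2.1 + t.2.1, (s.2.2 + t.2.2)%N)).
Definition mulT (u v : TT) : TT :=
  \sum_(s <- msupp u) \sum_(t <- msupp v)
     << u@_s * v@_t * twist s t *g kmul s t >>.
Definition oneT : TT := << ((0, 0%N), (0, 0%N)) >>.
Definition powT (u : TT) (m : nat) : TT := iter m (mulT u) oneT.

(* Delta(x) = x (x) x, Delta(x^-1) = x^-1 (x) x^-1, Delta(y) = y (x) x + 1 (x) y *)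
Definition DxT : TT := << ((1, 0%N), (1, 0%N)) >>.
Definition DxiT : TT := << ((-1, 0%N), (-1, 0%N)) >>.
Definition DyT : TT := << ((0, 1%N), (1, 0%N)) >> + << ((0, 0%N), (0, 1%N)) >>.
Definition DeltaXpow (n : int) : TT :=
  match n with Posz j => powT DxT j | Negz j => powT DxiT j.+1 end.

Definition Delta (f : HH) : TT :=
  \sum_(a <- msupp f) f@_a *: mulT (DeltaXpow a.1) (powT DyT a.2).
(* eps(x^n y^m) = eps(x)^n eps(y)^m = 1^n 0^m *)
Definition eps (f : HH) : k := \sum_(a <- msupp f) f@_a * (0 ^+ a.2).

Definition tensor (u v : HH) : TT :=
  \sum_(a <- msupp u) \sum_(b <- msupp v) << u@_a * v@_b *g (a, b) >>.
Definition tmap (f g : HH -> HH) (t : TT) : TT :=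
  \sum_(s <- msupp t) t@_s *: tensor (f << s.1 >>) (g << s.2 >>).

Definition oneH : HH := << (0, 0%N) >>.

Definition isAut0 (phi : HH -> HH) : Prop :=
  [/\ (forall (c : k) (u v : HH), phi (c *: u + v) = c *: phi u + phi v),
      bijective phi,
      (forall h : HH, Delta (phi h) = tmap phi phi (Delta h)),
      (forall h : HH, eps (phi h) = eps h)
    & phi oneH = oneH].

(* h \in H(m) = H_0 y^m *)
Definition inHm (m : nat) (h : HH) : Prop := forall a, a \in msupp h -> a.2 = m.
Definition inHle (m : nat) (h : HH) : Prop :=
  forall a, a \in msupp h -> (a.2 <= m)%N.

End QPlane.

(* Main.v *)
Require Import Defs.
From HB Require Import structures.
From mathcomp Require Import all_boot all_algebra.
From mathcomp Require Import finmap.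
From mathcomp.multinomials Require Import monalg.
From mathcomp Require Import zify ring.
Import GRing.Theory.
Local Open Scope ring_scope.

Section Gen.
Local Open Scope fset_scope.
Variables (k : fieldType) (K : choiceType).

Lemma coef_sum (I : Type) (r : seq I) (F : I -> {malg k[K]}) c :
  (\sum_(i <- r) F i)@_c = \sum_(i <- r) (F i)@_c.
Proof. by rewrite raddf_sum. Qed.

Lemma pick_sum (g : {malg k[K]}) (F : K -> k) (P : K -> bool) t0 :
  (forall t, P t = (t == t0)) ->
  \sum_(t <- msupp g) g@_t * F t *+ P t = g@_t0 * F t0.
Proof.
move=> HP; case: (boolP (t0 \in msupp g)) => H.
  rewrite (big_fsetD1 t0) //= HP eqxx mulr1n big1_fset ?addr0 // => t.
  by rewrite in_fsetD1 => /andP[ne _] _; rewrite HP (negbTE ne) mulr0n.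
rewrite big1_fset ?(mcoeff_outdom H) ?mul0r // => t tin _.
rewrite HP; case: eqP => [e|]; last by rewrite mulr0n.
by move: tin; rewrite e (negbTE H).
Qed.

Lemma zero_sum (g : {malg k[K]}) (F : K -> k) (P : K -> bool) :
  (forall t, ~~ P t) ->
  \sum_(t <- msupp g) g@_t * F t *+ P t = 0.
Proof. by move=> HP; rewrite big1_fset // => t _ _; rewrite (negbTE (HP t)) mulr0n. Qed.

Lemma msupp_sum (I : eqType) (r : seq I) (F : I -> {malg k[K]}) c :
  c \in msupp (\sum_(i <- r) F i) -> exists2 i, i \in r & c \in msupp (F i).
Proof.
rewrite -mcoeff_neq0 coef_sum; elim: r => [|i r IH]; first by rewrite big_nil eqxx.
rewrite big_cons; case: (boolP ((F i)@_c == 0)) => [/eqP ->|H _].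
  by rewrite add0r => /IH [j jr cj]; exists j => //; rewrite inE jr orbT.
by exists i; rewrite ?inE ?eqxx // -mcoeff_neq0.
Qed.

Lemma msuppZ_in (g : {malg k[K]}) (a : k) c : c \in msupp (a *: g) -> c \in msupp g.
Proof. by move=> H; apply: (fsubsetP (msuppZ_le a g)). Qed.

Lemma msuppU_in (a : k) (x c : K) : c \in msupp << a *g x >> -> c = x.
Proof. by move/(fsubsetP msuppU_le); rewrite inE => /eqP. Qed.

Lemma msupp1 x : msupp (<< x >> : {malg k[K]}) = [fset x].
Proof. by rewrite msuppU oner_eq0. Qed.

End Gen.

Section Q.
Variables (k : fieldType) (q : k).

Lemma coef_mulTw (d : {fset Kb * Kb}) (u v : TT k) c : (msupp u `<=` d)%fset ->
  (mulT q u v)@_c = \sum_(s <- d) \sum_(t <- msupp v)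
      u@_s * v@_t * twist q s t *+ (kmul s t == c).
Proof.
move=> sub; rewrite /mulT raddf_sum /= (big_fset_incl _ sub); last first.
  move=> s _ sn; rewrite raddf_sum /= big1_fset // => t _ _ /=.

  by rewrite mcoeffU (mcoeff_outdom sn) !mul0r mul0rn.
apply: eq_bigr => s _; rewrite raddf_sum /=; apply: eq_bigr => t _.
by rewrite mcoeffU.
Qed.

Lemma coef_mulT_U s (v : TT k) c :
  (mulT q << s >> v)@_c = \sum_(t <- msupp v) v@_t * twist q s t *+ (kmul s t == c).
Proof.
rewrite (@coef_mulTw [fset s]%fset) ?msupp1 // big_seq_fset1.
by apply: eq_bigr => t _; rewrite mcoeffUU mul1r.
Qed.

Lemma mulT_UU s t : mulT q << s >> << t >> = << twist q s t *g kmul s t >>.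
Proof.
apply/malgP => c; rewrite coef_mulT_U msupp1 big_seq_fset1 mcoeffUU mul1r.
by rewrite mcoeffU.
Qed.

Lemma msupp_mulT (u v : TT k) c : c \in msupp (mulT q u v) ->
  exists s, exists t, [/\ s \in msupp u, t \in msupp v & c = kmul s t].
Proof.
move/msupp_sum => [s sin /msupp_sum [t tin /msuppU_in ->]].
by exists s, t.
Qed.

Lemma twist0 s t : s.1.2 = 0%N -> s.2.2 = 0%N -> twist q s t = 1.
Proof. by case: s => [[a b] [c d]] /= -> ->; rewrite /twist /= !mul0r addr0 expr0z. Qed.

Lemma powS (u : TT k) m : powT q u m.+1 = mulT q u (powT q u m).
Proof. reflexivity. Qed.

Lemma powDx (j : nat) : powT q (DxT k) j = << ((Posz j, 0%N), (Posz j, 0%N)) >>.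
Proof.
elim: j => [|j IH].
  by apply/malgP => c; rewrite !mcoeffU; reflexivity.
rewrite powS IH /DxT mulT_UU twist0; [|reflexivity|reflexivity].
rewrite /kmul /=.
have e : (1 + Posz j = Posz j.+1)%R by lia.
rewrite e addn0.
by apply/malgP => c; rewrite !mcoeffU; reflexivity.
Qed.

Lemma powDxi (j : nat) : powT q (DxiT k) j.+1 = << ((Negz j, 0%N), (Negz j, 0%N)) >>.
Proof.
elim: j => [|j IH].
  have -> : powT q (DxiT k) 1 = mulT q (DxiT k) (oneT k) by [].
  by rewrite /oneT /DxiT mulT_UU (@twist0 (-1, 0%N, (-1, 0%N))).
have -> : powT q (DxiT k) j.+2 = mulT q (DxiT k) (powT q (DxiT k) j.+1) by [].
rewrite IH /DxiT mulT_UU (@twist0 (-1, 0%N, (-1, 0%N))); [|by []|by []].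
have e : (-1 + Negz j = Negz j.+1)%R by rewrite !NegzE; lia.
rewrite /kmul /= e addn0.
by apply/malgP => c; rewrite !mcoeffU.
Qed.

Lemma DXE (n : int) : DeltaXpow q n = << ((n, 0%N), (n, 0%N)) >>.
Proof. case: n => j; [exact: powDx | exact: powDxi]. Qed.


Definition dA : Kb * Kb := ((0, 1%N), (1, 0%N)).
Definition dB : Kb * Kb := ((0, 0%N), (0, 1%N)).

Lemma DyTE : DyT k = (<< dA >> + << dB >>)%R.
Proof. apply/malgP => c. rewrite /DyT. rewrite !mcoeffD. reflexivity. Qed.


Lemma dAB : (dA == dB) = false.
Proof. by apply/negbTE/eqP => /(congr1 (fun x => x.1.2)). Qed.

Lemma dBA : (dB == dA) = false.
Proof. by apply/negbTE/eqP => /(congr1 (fun x => x.1.2)). Qed.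

Lemma DyA : (DyT k)@_dA = 1.
Proof.
rewrite DyTE mcoeffD [X in X + _]mcoeffUU [X in _ + X]mcoeffU dBA /= mulr0n addr0.
reflexivity.
Qed.

Lemma DyB : (DyT k)@_dB = 1.
Proof.
rewrite DyTE mcoeffD [X in _ + X]mcoeffUU [X in X + _]mcoeffU dAB /= mulr0n add0r.
reflexivity.
Qed.

Lemma coef_mulDy (v : TT k) c : (mulT q (DyT k) v)@_c =
  \sum_(t <- msupp v) v@_t * twist q dA t *+ (kmul dA t == c) +
  \sum_(t <- msupp v) v@_t * twist q dB t *+ (kmul dB t == c).
Proof.
rewrite (@coef_mulTw (dA |` [fset dB])%fset); last first.
  rewrite DyTE; apply: fsubset_trans (msuppD_le _ _) _.
  apply: fsetUSS; rewrite msupp1; exact: fsubset_refl.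
rewrite big_fsetU1; last by rewrite inE dAB.
rewrite big_seq_fset1 DyA DyB.
congr (_ + _); apply: eq_bigr => t _; rewrite mul1r; reflexivity.
Qed.

Lemma supp_powDy m t : t \in msupp (powT q (DyT k) m) -> t.1.1 = 0 /\ (t.1.2 + t.2.2 = m)%N.
Proof.
elim: m t => [|m IH] t.
  rewrite /powT /= /oneT msupp1 inE => /eqP ->; split; reflexivity.
rewrite powS => /msupp_mulT [s [t' [sin /IH [e1 e2] ->]]].
move: e2 sin; case: t' e1 => [[a1 b1] [a2 b2]] /= e1 e2.
rewrite DyTE => /(fsubsetP (msuppD_le _ _)).
rewrite in_fsetU => /orP [] /msuppU_in -> /=; rewrite e1; split; lia.
Qed.

Lemma twistA t : twist q dA t = q ^ t.1.1.
Proof. by rewrite /twist /= mul0r addr0 mul1r. Qed.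

Lemma twistB t : twist q dB t = q ^ t.2.1.
Proof. by rewrite /twist /= mul0r add0r mul1r. Qed.

Lemma alpha M : (powT q (DyT k) M)@_((0, 0%N), (0, M)) = 1.
Proof.
elim: M => [|M IH].
  rewrite /powT /= /oneT mcoeffUU; reflexivity.
rewrite powS coef_mulDy zero_sum; last first.
  by case => [[a b] [c d]]; apply/negP => /eqP [_ e _ _]; lia.
rewrite add0r (@pick_sum _ _ _ _ _ ((0, 0%N), (0, M))); last first.
  case => [[a b] [c d]]; rewrite /kmul /=.
  apply/eqP/eqP => [[e1 e2 e3 e4]|[e1 e2 e3 e4]]; repeat f_equal; lia.
by rewrite IH twistB /= expr0z mulr1.
Qed.

Lemma beta M : (powT q (DyT k) M.+1)@_((0, 1%N), (1, M)) * (q - 1) = q ^+ M.+1 - 1.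
Proof.
elim: M => [|M IH].
  rewrite powS coef_mulDy (@zero_sum _ _ _ _ (fun t => kmul dB t == _)); last first.
    by case => [[a b] [c d]]; apply/negP => /eqP [_ _ _ e]; lia.
  rewrite addr0 (@pick_sum _ _ _ _ _ ((0, 0%N), (0, 0%N))); last first.
    case => [[a b] [c d]]; rewrite /kmul /=.
    apply/eqP/eqP => [[e1 e2 e3 e4]|[e1 e2 e3 e4]]; repeat f_equal; lia.
  by rewrite (alpha 0) twistA /= expr0z mulr1 mul1r expr1.
rewrite powS coef_mulDy (@pick_sum _ _ _ _ _ ((0, 0%N), (0, M.+1))); last first.
  case => [[a b] [c d]]; rewrite /kmul /=.
  apply/eqP/eqP => [[e1 e2 e3 e4]|[e1 e2 e3 e4]]; repeat f_equal; lia.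
rewrite (@pick_sum _ _ _ _ _ ((0, 1%N), (1, M))); last first.
  case => [[a b] [c d]]; rewrite /kmul /=.
  apply/eqP/eqP => [[e1 e2 e3 e4]|[e1 e2 e3 e4]]; repeat f_equal; lia.
rewrite alpha twistA twistB /= expr0z expr1z mulr1 mulrDl (mulrC _ q) -mulrA IH.
rewrite mul1r !exprS mulrBr mulr1 addrC addrA subrK; reflexivity.
Qed.

Lemma Delta_U (a : Kb) : Delta q << a >> = mulT q (DeltaXpow q a.1) (powT q (DyT k) a.2).
Proof. rewrite /Delta msupp1 big_seq_fset1 mcoeffUU scale1r; reflexivity. Qed.

Lemma coef_Delta (f : HH k) c :
  (Delta q f)@_c = \sum_(a <- msupp f) f@_a * (Delta q << a >>)@_c.
Proof.
rewrite [in LHS]/Delta [LHS]raddf_sum /=; apply: eq_bigr => a _.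
rewrite Delta_U mcoeffZ; reflexivity.
Qed.

Lemma supp_DeltaU (a : Kb) (c : Kb * Kb) : c \in msupp (Delta q << a >>) ->
  c.1.1 = a.1 /\ (c.1.2 + c.2.2 = a.2)%N.
Proof.
rewrite Delta_U DXE => /msupp_mulT [s [t [sin tin ->]]].
move: tin sin; case: t => [[a1 b1] [a2 b2]] /supp_powDy /= [e1 e2].
move/msuppU_in -> => /=; split; lia.
Qed.

Lemma key n M : (forall j : nat, (0 < j)%N -> q ^+ j != 1) ->
  (Delta q << (n, M.+1) >>)@_((n, 1%N), (n + 1, M)) != 0.
Proof.
move=> hq; rewrite Delta_U DXE coef_mulT_U.
rewrite (@pick_sum _ _ _ _ _ ((0, 1%N), (1, M))); last first.
  case => [[a b] [c d]]; rewrite /kmul /=.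
  apply/eqP/eqP => [[e1 e2 e3 e4]|[e1 e2 e3 e4]]; repeat f_equal; lia.
rewrite twist0 // mulr1; apply/eqP => e.
have := beta M; rewrite e mul0r => /eqP; rewrite eq_sym subr_eq0.
by apply/negP; apply: hq.
Qed.

Lemma sum_neq0 (I : eqType) (r : seq I) (F : I -> k) :
  \sum_(i <- r) F i != 0 -> exists2 i, i \in r & F i != 0.
Proof.
elim: r => [|i r IH]; first by rewrite big_nil eqxx.
rewrite big_cons; case: (boolP (F i == 0)) => [/eqP ->|H _].
  by rewrite add0r => /IH [j jr cj]; exists j => //; rewrite inE jr orbT.
by exists i; rewrite ?inE ?eqxx.
Qed.

Lemma supp_Delta (f : HH k) c : c \in msupp (Delta q f) ->
  exists2 a, a \in msupp f & c \in msupp (Delta q << a >>).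
Proof.
move=> H0; have : (Delta q f)@_c != 0 by rewrite mcoeff_neq0.
rewrite coef_Delta => /sum_neq0 [a ain].
rewrite mulf_eq0 negb_or => /andP[_ H].
exists a; first exact: ain.
move: H; rewrite mcoeff_neq0; exact.
Qed.

Lemma coef_tensor (u v : HH k) a b : (tensor u v)@_(a, b) = u@_a * v@_b.
Proof.
rewrite /tensor raddf_sum /=.
transitivity (\sum_(x <- msupp u) u@_x * v@_b *+ (x == a)).
  apply: eq_bigr => x _; rewrite raddf_sum /=.
  transitivity (\sum_(y <- msupp v) v@_y * (u@_x *+ (x == a)) *+ (y == b)).
    apply: eq_bigr => y _; rewrite mcoeffU xpair_eqE.
    by case: (x == a); case: (y == b); rewrite /= ?mulr0n ?mulr1n ?mulr0 // mulrC.
  rewrite (@pick_sum _ _ _ _ _ b) // mulrC.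
  by case: (x == a); rewrite ?mulr0n ?mulr1n ?mul0r.
exact: pick_sum.
Qed.

Lemma supp_tensor (u v : HH k) c : c \in msupp (tensor u v) ->
  c.1 \in msupp u /\ c.2 \in msupp v.
Proof.
case: c => a b; rewrite -mcoeff_neq0 coef_tensor mulf_eq0 negb_or.
by rewrite !mcoeff_neq0 => /andP.
Qed.

Lemma supp_tmap (f g : HH k -> HH k) t c : c \in msupp (tmap f g t) ->
  exists2 s, s \in msupp t & c.1 \in msupp (f << s.1 >>) /\ c.2 \in msupp (g << s.2 >>).
Proof.
move/msupp_sum => [s sin /msuppZ_in /supp_tensor H]; by exists s.
Qed.

End Q.

Section M.
Variables (k : fieldType) (q : k).

Lemma grouplike (g : HH k) : Delta q g = tensor g g ->
  forall a, a \in msupp g -> a.2 = 0%N.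
Proof.
move=> hg.
have step : forall a, a \in msupp g -> exists2 a', a' \in msupp g & a'.2 = (a.2 + a.2)%N.
  move=> a ain.
  have H : (a, a) \in msupp (Delta q g).
    rewrite hg -mcoeff_neq0 coef_tensor mulf_neq0 // mcoeff_neq0; exact: ain.
  move/supp_Delta: H => [a' a'in /supp_DeltaU [_ e]].
  by exists a'; rewrite // -e.
have big : forall N, (exists2 a, a \in msupp g & (0 < a.2)%N) ->
    exists2 a, a \in msupp g & (N < a.2)%N.
  move=> N h; elim: N => [//|N [a ain lt]].
  have [a' a'in e] := step a ain; exists a' => //; rewrite e; lia.
move=> a ain; apply/eqP; rewrite -leqn0 leqNgt; apply/negP => pos.
have [b bin lt] := big (\max_(x <- msupp g) x.2)%N (ex_intro2 _ _ a ain pos).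
have := @leq_bigmax_seq _ (enum_fset (msupp g)) predT (fun x : Kb => x.2) b bin isT.
by move=> le; have := leq_ltn_trans le lt; rewrite ltnn.
Qed.

Lemma Delta_x0 (n : int) : Delta q << (n, 0%N) >> = << ((n, 0%N), (n, 0%N)) >>.
Proof.
rewrite Delta_U DXE /=.

rewrite /oneT mulT_UU twist0; [|reflexivity|reflexivity].
rewrite /kmul /= addr0 addn0.
by apply/malgP => c; rewrite !mcoeffU; reflexivity.
Qed.

Lemma tmap_U (f g : HH k -> HH k) s : tmap f g << s >> = tensor (f << s.1 >>) (g << s.2 >>).
Proof. rewrite /tmap msupp1 big_seq_fset1 mcoeffUU scale1r; reflexivity. Qed.

End M.

Theorem lemma2p7 (k : fieldType) (q : k) (hq0 : q != 0)
  (hq : forall n : nat, (0 < n)%N -> q ^+ n != 1)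
  (phi : HH k -> HH k) (hphi : isAut0 q phi) :
  forall (m : nat) (h : HH k), inHm m h -> inHle m (phi h).
Proof.
case: hphi => _ _ hD _ _.
have GL : forall (n : int) c, c \in msupp (phi << (n, 0%N) >>) -> c.2 = 0%N.
  move=> n; apply: (@grouplike k q).
  by rewrite hD Delta_x0 tmap_U.
move=> m; elim/ltn_ind: m => m IH h hh c cin.
rewrite leqNgt; apply/negP => lt.
move: c cin lt => [n M] cin /= lt.
case: M cin lt => [//|M] cin lt.
have Hcs : ((n, 1%N), (n + 1, M)) \in msupp (Delta q (phi h)).
  rewrite -mcoeff_neq0 coef_Delta (big_fsetD1 (n, M.+1)) //=.
  rewrite big1_fset ?addr0.
    by rewrite mulf_neq0 ?key // mcoeff_neq0.
  move=> a; rewrite in_fsetD1 => /andP [ne _] _.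
  apply/eqP; rewrite mulf_eq0; apply/orP; right.
  rewrite mcoeff_eq0; apply/negP => /supp_DeltaU [e1 e2].
  move: ne; case: a e1 e2 => a1 a2 /= e1 e2.
  rewrite -e1 -e2 /=; rewrite eqxx; exact.
rewrite hD in Hcs.
move/supp_tmap: Hcs => [s sin [h1 h2]].
have [a ain ha] := @supp_Delta k q _ _ sin.
have [_ e] := @supp_DeltaU k q _ _ ha.
have am := hh a ain.
move: sin ha h1 h2 e; case: s => [[s11 s12] [s21 s22]] sin ha /= h1 h2 e.
clear sin ha; case: s12 e h1 => [|s12] e h1.
  by have := GL s11 _ h1.

have lt2 : (s22 < m)%N by rewrite -am -e addSn ltnS leq_addl.
have hin : inHm s22 (<< (s21, s22) >> : HH k).
  by move=> x; rewrite msupp1 inE => /eqP ->.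
have /= le := IH s22 lt2 _ hin _ h2.
rewrite ltnS in lt.
by have := leq_ltn_trans (leq_trans lt le) lt2; rewrite ltnn.
Qed.
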